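(* Let $H^*$ be a graph and let $A, B \subseteq V(H^* )$ be disjoint sets such that every vertex of $A$ is isolated in $H^*$ and $B$ has the robust sapphire property for $H^*$. Let $F \subseteq \{ab \colon a \in A, b \in B\}$ and $H \coloneqq (V(H^* ), E(H^* ) \cup F)$. Let $B_{=1} \coloneqq \{b \in B \colon |N_H(b) \cap A| =1\}$, $A' \coloneqq \{a \in A \colon d_H(a) \geq 4,\ N_H(a) \subseteq B_{=1}\}$, and $B' \coloneqq N_H(A \setminus A')$. Then $(S(H^* ) \setminus B') \cup A' \subseteq S(H)$. In addition, $B \setminus N_H(A)$ has the robust sapphire property for $H$.
   Context: For a graph $G$ and $X\subseteq V(G)$, $N_G(X)=\{x\in V(G)\setminus X: xy\in E(G)\text{ for some }y\in X\}$ (external neighbourhood), $N_G(x)=N_G(\{x\})$, $d_G(x)$ is the degree and $\mathrm{dist}_G$ is graph distance. The strong $4$-core $S(G)$ is the maximal set $X\subseteq V(G)$ such that $|N_G(x)\cap X|\geq 4$ for every $x\in X\cup N_G(X)$ (well-defined since the union of two such sets is again such a set). A set $B\subseteq V(G)$ has the robust sapphire property for $G$ if (RS1) for every $x\in B\cup N_G(B)$ we have $\{x\}\cup N_G(x)\subseteq S(G)$ and $d_G(x)\ge 5$; and (RS2) for all distinct $b_1,b_2\in B$, $\mathrm{dist}_G(b_1,b_2)\geq 5$. *)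

(* Defs.v *)
(* Finite simple graphs: a symmetric irreflexive rel on a finType. *)
From mathcomp Require Import all_boot.
Set Implicit Arguments. Unset Strict Implicit. Unset Printing Implicit Defensive.

Section Graphs.
Variable T : finType.
Implicit Types (e : rel T) (X : {set T}) (x y : T).

Definition nbhd e X : {set T} := [set x | (x \notin X) && [exists y in X, e y x]].
Definition nbhd1 e x : {set T} := nbhd e [set x].
Definition deg e x : nat := #|[set y | e x y]|.

(* dist_G(x,y) >= k : every walk from x to y has length >= k
   (vacuous if x,y are in different components, i.e. distance infinite) *)
Definition dist_ge e (k : nat) x y : Prop :=
  forall p : seq T, path e x p -> last x p = y -> k <= size p.

Definition core4 e X : bool :=
  [forall x in X :|: nbhd e X, 4 <= #|nbhd1 e x :&: X|].

(* strong 4-core: the maximal such set = the union of all such sets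
   (the family is closed under union) *)
Definition strong4core e : {set T} := \bigcup_(X | core4 e X) X.

Definition robust_sapphire e (B : {set T}) : Prop :=
  (forall x, x \in B :|: nbhd e B ->
     (x |: nbhd1 e x) \subset strong4core e /\ 5 <= deg e x) /\
  (forall b1 b2, b1 \in B -> b2 \in B -> b1 != b2 -> dist_ge e 5 b1 b2).

End Graphs.

(* Main.v *)
Require Import Defs.
From mathcomp Require Import all_boot zify.
Set Implicit Arguments. Unset Strict Implicit. Unset Printing Implicit Defensive.

Section Gen.
Variable T : finType.
Implicit Types (e : rel T) (X : {set T}) (x y : T).

Lemma in_nbhd e X y : (y \in nbhd e X) = (y \notin X) && [exists x in X, e x y].
Proof. by rewrite inE. Qed.

Lemma in_nbhd1 e x y : (y \in nbhd1 e x) = (y != x) && e x y.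
Proof.
rewrite /nbhd1 in_nbhd in_set1; congr (_ && _).
apply/exists_inP/idP => [[z /set1P -> //]| h]; by exists x; rewrite ?set11.
Qed.

Lemma nbhd1_irr e x : irreflexive e -> nbhd1 e x = [set y | e x y].
Proof.
move=> irr; apply/setP => y; rewrite in_nbhd1 inE.
by case: eqP => [->|]; rewrite ?irr.
Qed.

Lemma core4_sub e X : core4 e X -> X \subset strong4core e.
Proof. by move=> h; apply: (bigcup_sup X h). Qed.

Lemma S_prop e x : x \in strong4core e :|: nbhd e (strong4core e) ->
  4 <= #|nbhd1 e x :&: strong4core e|.
Proof.
have key: forall X, core4 e X -> x \in X :|: nbhd e X ->
    4 <= #|nbhd1 e x :&: strong4core e|.
  move=> X hX hx; apply: leq_trans (forall_inP hX x hx) _.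
  by apply/subset_leq_card/setIS/core4_sub.
case/setUP => [/bigcupP [X hX xX] | ].
  by apply: (key X hX); rewrite inE xX.
rewrite in_nbhd => /andP [xS /exists_inP [y /bigcupP [X hX yX] eyx]].
apply: (key X hX); apply/setUP; right; rewrite in_nbhd; apply/andP; split.
  by apply: contra xS => xX; apply/bigcupP; exists X.
by apply/exists_inP; exists y.
Qed.
End Gen.
Section Main.
Variable T : finType.
Variable eHs : rel T.
Hypothesis eHs_sym : symmetric eHs.
Hypothesis eHs_irr : irreflexive eHs.
Variables (A B : {set T}) (F : {set T * T}).
Hypothesis dAB : [disjoint A & B].
Hypothesis isoA : forall a y, a \in A -> ~~ eHs a y.
Hypothesis RS : robust_sapphire eHs B.
Hypothesis HF : forall f, f \in F -> (f.1 \in A) && (f.2 \in B).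

Local Definition eH := fun x y => [|| eHs x y, (x, y) \in F | (y, x) \in F].
Local Definition B1 := [set b in B | #|nbhd1 eH b :&: A| == 1].
Local Definition A' := [set a in A | (4 <= deg eH a) && (nbhd1 eH a \subset B1)].
Local Definition B' := nbhd eH (A :\: A').
Local Definition S := strong4core eHs.
Local Definition X := (S :\: B') :|: A'.

Lemma AnB x : x \in A -> x \in B -> False.
Proof. by move=> h1 h2; rewrite (disjointFr dAB h1) in h2. Qed.

Lemma eH_sym x y : eH x y = eH y x.
Proof.
rewrite /eH eHs_sym; case: ((x,y) \in F); case: ((y,x) \in F); by rewrite ?orbT ?orbF.
Qed.

Lemma eH_irr : irreflexive eH.
Proof.
move=> x; rewrite /eH eHs_irr orbb /=; apply/negbTE/negP => /HF/andP[h1 h2].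
exact: AnB h1 h2.
Qed.

Lemma eHs_eH x y : eHs x y -> eH x y.
Proof. by rewrite /eH => ->. Qed.

Lemma eH_A a y : a \in A -> eH a y -> (y \in B) && ((a, y) \in F).
Proof.
move=> hA; rewrite /eH (negbTE (isoA _ hA)) /=; case/orP => [h | /HF/andP[_ h]].
  by case/andP: (HF h) => _ /= ->; rewrite h.
by case: (AnB hA h).
Qed.

Lemma eH_nA x y : x \notin A -> y \notin A -> eH x y -> eHs x y.
Proof.
move=> hx hy; case/or3P => // /HF/andP[h _]; by rewrite h in hx hy.
Qed.

Lemma eHs_nA x y : eHs x y -> x \notin A.
Proof. by move=> h; apply/negP => hA; move: (isoA y hA); rewrite h. Qed.

Lemma RS1 x : x \in B :|: nbhd eHs B -> (x |: nbhd1 eHs x) \subset S /\ 5 <= deg eHs x.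
Proof. exact: RS.1. Qed.

Lemma B_S b : b \in B -> b \in S.
Proof.
move=> hb; have hbx : b \in B :|: nbhd eHs B by rewrite in_setU hb.
have [h _] := RS1 hbx; exact: (subsetP h b (setU11 _ _)).
Qed.

Lemma dist1 b1 b2 : b1 \in B -> b2 \in B -> eHs b1 b2 -> False.
Proof.
move=> h1 h2 e; have ne : b1 != b2 by apply: contraTneq e => ->; rewrite eHs_irr.
have H := RS.2 b1 b2 h1 h2 ne [:: b2].
have : 5 <= size [:: b2] by apply: H => //=; rewrite e.
by [].
Qed.

Lemma dist2 b1 x b2 : b1 \in B -> b2 \in B -> b1 != b2 -> eHs b1 x -> eHs x b2 -> False.
Proof.
move=> h1 h2 ne e1 e2.
have H := RS.2 b1 b2 h1 h2 ne [:: x; b2].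
have : 5 <= size [:: x; b2] by apply: H => //=; rewrite e1 e2.
by [].
Qed.

Lemma AS a : a \in A -> a \notin S.
Proof.
move=> ha; apply/negP => haS.
have := @S_prop _ eHs a; rewrite -/S in_setU haS => /(_ isT).
have sub : nbhd1 eHs a :&: S \subset set0.
  apply/subsetP => y; rewrite in_setI in_nbhd1 => /andP[/andP[_ e] _].
  by move: (isoA y ha); rewrite e.
by move: (subset_leq_card sub); rewrite cards0; lia.
Qed.

Lemma B'_prop y : y \in B' ->
  [/\ y \in B, y \in nbhd eH A & exists2 a, a \in A :\: A' & eH a y].
Proof.
rewrite /B' in_nbhd => /andP[_ /exists_inP[a ha e]].
have haA : a \in A by case/setDP: ha.
have /andP[yB _] := eH_A haA e.
split => //; last by exists a.
rewrite in_nbhd; apply/andP; split.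
  by apply/negP => yA; exact: AnB yA yB.
by apply/exists_inP; exists a.
Qed.

Lemma X_core : core4 eH X.
Proof.
apply/forall_inP => x hx.
case: (boolP (x \in A)) => xA.
  case: (boolP (x \in A')) => xA'.
    move: (xA'); rewrite inE => /andP[_ /andP[hdeg hsub]].
    have sub : nbhd1 eH x \subset X.
      apply/subsetP => y hy.
      move: (subsetP hsub y hy); rewrite inE => /andP[yB /cards1P[c hc]].
      rewrite /X in_setU; apply/orP; left; rewrite in_setD (B_S yB) andbT.
      apply/negP => /B'_prop[_ _ [a ha eay]].
      move: hy; rewrite in_nbhd1 => /andP[nyx exy].
      have hx1 : x \in nbhd1 eH y :&: A.
        by rewrite in_setI in_nbhd1 eq_sym nyx eH_sym exy xA.
      have ha1 : a \in nbhd1 eH y :&: A.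
        rewrite in_setI in_nbhd1 eH_sym eay andbT.
        case/setDP: (ha) => -> _; rewrite andbT.
        by apply/negP => /eqP ay; subst a; rewrite eH_irr in eay.
      rewrite hc !in_set1 in hx1 ha1.
      move/eqP: hx1 => hx1; move/eqP: ha1 => ha1.
      by case/setDP: ha => _; rewrite ha1 -hx1 xA'.
    rewrite (setIidPl sub) (nbhd1_irr _ eH_irr); exact: hdeg.
  exfalso; move: hx; rewrite in_setU => /orP[].
    rewrite /X in_setU => /orP[/setDP[xS _] | ]; last by rewrite (negbTE xA').
    by move: (AS xA); rewrite xS.
  rewrite in_nbhd => /andP[_ /exists_inP[y hy e]].
  rewrite eH_sym in e; have /andP[yB _] := eH_A xA e.
  move: hy; rewrite /X in_setU => /orP[/setDP[_ /negP]|].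
    apply; rewrite /B' in_nbhd; apply/andP; split.
      by apply/negP => /setDP[yA _]; exact: AnB yA yB.
    apply/exists_inP; exists x; first by rewrite in_setD xA' xA.
    exact: e.
  rewrite inE => /andP[yA _]; exact: AnB yA yB.
have xS : x \in S :|: nbhd eHs S.
  move: hx; rewrite in_setU => /orP[].
    rewrite /X in_setU => /orP[/setDP[xS _]|]; first by rewrite in_setU xS.
    by rewrite inE => /andP[h _]; rewrite h in xA.
  rewrite in_nbhd => /andP[xnX /exists_inP[y hy e]].
  case: (boolP (x \in S)) => xS; first by rewrite in_setU xS.
  rewrite in_setU; apply/orP; right; rewrite in_nbhd xS /=.
  move: hy; rewrite /X in_setU => /orP[/setDP[yS _] | ].
    apply/exists_inP; exists y => //; apply: eH_nA => //.
    by apply/negP => yA; move: (AS yA); rewrite yS.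
  rewrite inE => /andP[yA _]; have /andP[xB _] := eH_A yA e.
  by rewrite (B_S xB) in xS.
have h4 := @S_prop _ eHs x xS.
case: (boolP [exists b in B', eHs x b]) => [/exists_inP[b hb exb] | hno].
  have [bB _ _] := B'_prop hb.
  have xnB : x \notin B by apply/negP => xB; exact: dist1 xB bB exb.
  have xN : x \in B :|: nbhd eHs B.
    rewrite in_setU in_nbhd (negbTE xnB) /=; apply/exists_inP; exists b => //.
    by rewrite eHs_sym.
  have [hsub hdeg] := RS1 xN.
  have sub : nbhd1 eHs x :\ b \subset nbhd1 eH x :&: X.
    apply/subsetP => y; rewrite in_setD1 in_nbhd1 => /andP[nyb /andP[nyx exy]].
    rewrite in_setI in_nbhd1 nyx (eHs_eH exy) /= /X in_setU; apply/orP; left.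
    rewrite in_setD (subsetP hsub y) ?andbT; last by rewrite in_setU1 in_nbhd1 nyx exy orbT.
    apply/negP => /B'_prop[yB _ _].
    by apply: (dist2 bB yB _ _ exy); [rewrite eq_sym | rewrite eHs_sym].
  apply: leq_trans (subset_leq_card sub).
  move: hdeg; rewrite /deg -(nbhd1_irr _ eHs_irr) (cardsD1 b).
  case: (b \in _) => /=; lia.
apply: leq_trans h4 (subset_leq_card _).
apply/subsetP => y; rewrite !in_setI !in_nbhd1 => /andP[/andP[nyx exy] yS].
rewrite nyx (eHs_eH exy) /= /X in_setU in_setD yS andbT; apply/orP; left.
apply/negP => yB'; apply: (negP hno); apply/exists_inP; by exists y.
Qed.

Lemma X_S : X \subset strong4core eH.
Proof. exact: core4_sub X_core. Qed.

Lemma B0_noF b y : b \in B -> b \notin nbhd eH A -> eH b y -> eHs b y.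
Proof.
move=> bB bnA; case/or3P => // h; case/andP: (HF h) => /= h1 h2.
  by case: (AnB h1 bB).
case/negP: bnA; rewrite in_nbhd; apply/andP; split.
  by apply/negP => bA; exact: AnB bA bB.
apply/exists_inP; exists y => //.
by rewrite /eH h !orbT.
Qed.

Lemma walk_split (e1 e2 : rel T) x p : path e2 x p -> path e1 x p \/
  exists q y z, [/\ path e1 x q, last x q = y, e2 y z, ~~ e1 y z & size q < size p].
Proof.
elim: p x => [|z p IH] x /=; first by left.
case/andP => exz hp; case: (boolP (e1 x z)) => e1xz.
  case: (IH z hp) => [h|[q [y [w [h1 h2 h3 h4 h5]]]]]; first by left; rewrite h.
  by right; exists (z :: q), y, w; split => //=; rewrite e1xz.
by right; exists [::], x, z; split.
Qed.

Lemma reach_nA x q : path eHs x q -> x \notin A -> last x q \notin A.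
Proof.
case/lastP: q => [|q w] //=; rewrite rcons_path last_rcons => /andP[_ e] _.
by rewrite eHs_sym in e; exact: (eHs_nA e).
Qed.

Lemma RS_H : robust_sapphire eH (B :\: nbhd eH A).
Proof.
split.
  move=> x hx.
  suff [xN hE hX] : [/\ x \in B :|: nbhd eHs B, (forall y, eH x y -> eHs x y)
                      & (x |: nbhd1 eH x) \subset S :\: B'].
    have [_ hdeg] := RS1 xN; split.
      apply: subset_trans hX _; apply: subset_trans X_S.
      by apply/subsetP => z hz; rewrite /X in_setU hz.
    apply: leq_trans hdeg _; apply/subset_leq_card/subsetP => y; rewrite !inE.
    exact: eHs_eH.
  move: hx; rewrite in_setU => /orP[ /setDP[xB xnA] | ].
    have hE : forall y, eH x y -> eHs x y := fun y => B0_noF xB xnA.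
    have xN : x \in B :|: nbhd eHs B by rewrite in_setU xB.
    have [hsub _] := RS1 xN.
    split => //.
    apply/subsetP => y; rewrite in_setU1 in_setD => /orP[/eqP ->| ].
      rewrite (subsetP hsub x (setU11 _ _)) andbT.
      by apply/negP => /B'_prop[_ h _]; rewrite h in xnA.
    rewrite in_nbhd1 => /andP[nyx /hE exy].
    rewrite (subsetP hsub y) ?andbT; last by rewrite in_setU1 in_nbhd1 nyx exy orbT.
    by apply/negP => /B'_prop[yB _ _]; exact: dist1 xB yB exy.
  rewrite in_nbhd => /andP[xnB0 /exists_inP[b /setDP[bB bnA] ebx]].
  have ebx' := B0_noF bB bnA ebx.
  have xnB : x \notin B by apply/negP => xB; exact: dist1 bB xB ebx'.
  have xnA : x \notin A by apply/negP => xA; move: (isoA b xA); rewrite eHs_sym ebx'.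
  have xN : x \in B :|: nbhd eHs B.
    by rewrite in_setU in_nbhd (negbTE xnB) /=; apply/exists_inP; exists b.
  have hE : forall y, eH x y -> eHs x y.
    move=> y; case/or3P => // h; case/andP: (HF h) => /= h1 h2.
      by rewrite h1 in xnA.
    by rewrite h2 in xnB.
  have [hsub _] := RS1 xN.
  split => //; apply/subsetP => y; rewrite in_setU1 in_setD => /orP[/eqP ->|].
    rewrite (subsetP hsub x (setU11 _ _)) andbT.
    by apply/negP => /B'_prop[h _ _]; rewrite h in xnB.
  rewrite in_nbhd1 => /andP[nyx /hE exy].
  rewrite (subsetP hsub y) ?andbT; last by rewrite in_setU1 in_nbhd1 nyx exy orbT.
  apply/negP => /B'_prop[yB yN _].
  case: (eqVneq b y) => [eby | nby].
    by subst y; rewrite yN in bnA.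
  exact: dist2 bB yB nby ebx' exy.
move=> b1 b2 /setDP[b1B b1nA] /setDP[b2B _] ne p hp hl.
have [hs | [q [y [z [hq hlq eyz neyz hsz]]]]] := walk_split eHs hp.
  exact: RS.2 b1 b2 b1B b2B ne p hs hl.
have b1nA' : b1 \notin A by apply/negP => h; exact: AnB h b1B.
case/or3P: (eyz) => [h|h|h]; first by rewrite h in neyz.
  case/andP: (HF h) => /= yA _.
  by move: (reach_nA hq b1nA'); rewrite hlq yA.
case/andP: (HF h) => /= zA yB.
have yN : y \in nbhd eH A.
  rewrite in_nbhd; apply/andP; split; first by apply/negP => yA; exact: AnB yA yB.
  by apply/exists_inP; exists z => //; rewrite /eH h orbT.
have ne1 : b1 != y by apply: contraNneq b1nA => ->.
have h5 := RS.2 b1 y b1B yB ne1 q hq hlq.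
exact: leq_trans h5 (ltnW hsz).
Qed.

End Main.

Theorem proposition6p5 (T : finType) (eHs : rel T)
  (eHs_sym : symmetric eHs) (eHs_irr : irreflexive eHs)
  (A B : {set T}) (F : {set T * T}) :
  [disjoint A & B] ->
  (forall a y, a \in A -> ~~ eHs a y) ->
  robust_sapphire eHs B ->
  (forall f, f \in F -> (f.1 \in A) && (f.2 \in B)) ->
  let eH := fun x y => [|| eHs x y, (x, y) \in F | (y, x) \in F] in
  let B1 := [set b in B | #|nbhd1 eH b :&: A| == 1] in
  let A' := [set a in A | (4 <= deg eH a) && (nbhd1 eH a \subset B1)] in
  let B' := nbhd eH (A :\: A') in
  ((strong4core eHs :\: B') :|: A') \subset strong4core eH /\
  robust_sapphire eH (B :\: nbhd eH A).
Proof.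
move=> dAB isoA RS HF eH B1 A' B'.
split.
  exact: (X_S eHs_sym eHs_irr dAB isoA RS HF).
exact: (RS_H eHs_sym eHs_irr dAB isoA RS HF).
Qed.
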